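(* Let $d$ be a positive integer, $M\subseteq\mathbb Z_{>0}$ a finite set, and $Q$ a non-empty finite set of primes such that the elements of $M\cup Q$ are pairwise coprime, $M\cap Q=\emptyset$, and $\min(Q)>d$. Let $b_m\in\mathbb Z$ for $m\in M$ and $c_{q,i}\in\mathbb Z$ for $q\in Q$, $1\le i\le d$. Consider the system $\mathcal S$ of simultaneous congruences and non-congruences in the unknown $x$: $x\equiv b_m \pmod m$ for all $m\in M$, and $x\not\equiv c_{q,i}\pmod q$ for all $q\in Q$ and $1\le i\le d$. Then for every $k\in\mathbb Z$, $\mathcal S$ has a solution in the interval $\{k,k+1,\dots,k+\prod M\cdot E(Q,d)\}$, where $$E(Q,d)=\big((d+1)\cdot|Q|\big)^{4(d+1)^2(3+\ln\ln(|Q|+1))}.$$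
   Context: $\prod M$ denotes the product of all elements of $M$ (equal to $1$ if $M=\emptyset$); $|Q|$ is the cardinality of $Q$. *)

(* Defs.v *)
From Stdlib Require Import ZArith Znumtheory Reals List.
Open Scope R_scope.

Definition prodZ (M : list Z) : Z := fold_right Z.mul 1%Z M.

Definition E_bound (cardQ d : nat) : R :=
  Rpower (INR ((d + 1) * cardQ))
         (4 * (INR (d + 1)) ^ 2 * (3 + ln (ln (INR cardQ + 1)))).

(* Main.v *)
Require Import Defs.
From Stdlib Require Import ZArith Znumtheory Reals List.
From Stdlib Require Import Lia Lra Psatz Arith Bool.

Open Scope R_scope.

Fixpoint sumN (f : nat -> R) (n : nat) : R :=
  match n with O => 0 | S n => sumN f n + f n end.

Lemma sumN_ext f g n : (forall i, (i < n)%nat -> f i = g i) -> sumN f n = sumN g n.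
Proof. induction n; simpl; intros H; auto. rewrite IHn by (intros; apply H; lia). rewrite H by lia. auto. Qed.

Lemma sumN_plus f g n : sumN (fun i => f i + g i) n = sumN f n + sumN g n.
Proof. induction n; simpl; lra. Qed.

Lemma sumN_minus f g n : sumN (fun i => f i - g i) n = sumN f n - sumN g n.
Proof. induction n; simpl; lra. Qed.

Lemma sumN_scal c f n : sumN (fun i => c * f i) n = c * sumN f n.
Proof. induction n; simpl; [lra|rewrite IHn; lra]. Qed.

Lemma sumN_const c n : sumN (fun _ => c) n = INR n * c.
Proof. induction n; simpl sumN; [simpl; lra|rewrite IHn, S_INR; lra]. Qed.

Lemma sumN_le f g n : (forall i, (i < n)%nat -> f i <= g i) -> sumN f n <= sumN g n.
Proof. induction n; simpl; intros H; [lra|]. pose proof (H n ltac:(lia)). pose proof (IHn ltac:(intros; apply H; lia)). lra. Qed.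

Lemma sumN_nonneg f n : (forall i, (i < n)%nat -> 0 <= f i) -> 0 <= sumN f n.
Proof. intros H. replace 0 with (sumN (fun _ => 0) n). apply sumN_le; auto. rewrite sumN_const; lra. Qed.

Lemma sumN_add f a b : sumN f (a + b) = sumN f a + sumN (fun i => f (a + i)%nat) b.
Proof. induction b; simpl. rewrite Nat.add_0_r; lra. rewrite Nat.add_succ_r. simpl. rewrite IHb. lra. Qed.

Lemma sumN_swap (h : nat -> nat -> R) A B :
  sumN (fun j => sumN (fun s => h j s) B) A = sumN (fun s => sumN (fun j => h j s) A) B.
Proof.
  induction A; simpl. rewrite sumN_const; lra.
  rewrite IHA. rewrite <- sumN_plus. auto.
Qed.

Lemma sumN_mono_len f a b : (a <= b)%nat -> (forall i, 0 <= f i) -> sumN f a <= sumN f b.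
Proof. intros Hab H. replace b with (a + (b - a))%nat by lia. rewrite sumN_add.
  pose proof (sumN_nonneg (fun i => f (a + i)%nat) (b - a) ltac:(intros; apply H)). lra. Qed.

Definition sumZ (f : Z -> R) (t0 : Z) (N : nat) : R := sumN (fun j => f (t0 + Z.of_nat j)%Z) N.

Lemma sumZ_S f t0 N : sumZ f t0 (S N) = sumZ f t0 N + f (t0 + Z.of_nat N)%Z.
Proof. reflexivity. Qed.

Lemma sumZ_S' f t0 N : sumZ f t0 (S N) = f t0 + sumZ f (t0 + 1)%Z N.
Proof. unfold sumZ. induction N.
  simpl. rewrite Z.add_0_r. lra.
  rewrite sumN_add with (a := 1%nat) (b := S N). simpl. rewrite Z.add_0_r.
  assert (sumN (fun i => f (t0 + Z.pos (Pos.of_succ_nat i))%Z) N + f (t0 + Z.pos (Pos.of_succ_nat N))%Z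
   = sumN (fun j : nat => f (t0 + 1 + Z.of_nat j)%Z) N + f (t0 + 1 + Z.of_nat N)%Z).
  { f_equal. apply sumN_ext. intros. f_equal. lia. f_equal. lia. }
  lra.
Qed.

Lemma sumZ_add f t0 a b : sumZ f t0 (a + b) = sumZ f t0 a + sumZ f (t0 + Z.of_nat a)%Z b.
Proof. unfold sumZ. rewrite sumN_add. f_equal. apply sumN_ext. intros. f_equal. lia. Qed.

Definition periodic (f : Z -> R) (T : Z) := forall t, f (t + T)%Z = f t.

Lemma periodic_mul f T : periodic f T -> forall k t, f (t + k * T)%Z = f t.
Proof.
  intros H.
  assert (Hn : forall n : nat, forall t, f (t + Z.of_nat n * T)%Z = f t).
  { induction n; intros t. simpl. rewrite Z.add_0_r; auto.
    rewrite <- (IHn t). rewrite <- (H (t + Z.of_nat n * T)%Z). f_equal. rewrite Nat2Z.inj_succ; ring. }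
  intros k t. destruct (Z_le_gt_dec 0 k).
  - replace k with (Z.of_nat (Z.to_nat k)) by lia. apply Hn.
  - rewrite <- (Hn (Z.to_nat (- k)) (t + k * T)%Z). f_equal. rewrite Z2Nat.id by lia. ring.
Qed.

Lemma window_const f (Tn : nat) : periodic f (Z.of_nat Tn) -> forall t0, sumZ f t0 Tn = sumZ f 0 Tn.
Proof.
  intros H.
  assert (Hs : forall t, sumZ f (t + 1)%Z Tn = sumZ f t Tn).
  { intros t. pose proof (sumZ_S f t Tn). pose proof (sumZ_S' f t Tn).
    rewrite H in H0. lra. }
  assert (Hn : forall n : nat, forall t, sumZ f (t + Z.of_nat n)%Z Tn = sumZ f t Tn).
  { induction n; intros t. simpl. rewrite Z.add_0_r; auto.
    rewrite <- (IHn t). rewrite <- (Hs (t + Z.of_nat n)%Z). f_equal. lia. }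
  intros t0. destruct (Z_le_gt_dec 0 t0).
  - rewrite <- (Hn (Z.to_nat t0) 0%Z). f_equal. lia.
  - rewrite <- (Hn (Z.to_nat (- t0)) t0). f_equal. lia.
Qed.

Open Scope R_scope.

Lemma sumZ_blocks h t0 (Tn j : nat) :
  sumZ h t0 (j * Tn) = sumN (fun j' => sumZ h (t0 + Z.of_nat j' * Z.of_nat Tn)%Z Tn) j.
Proof.
  induction j. simpl. reflexivity.
  replace (S j * Tn)%nat with (j * Tn + Tn)%nat by lia.
  rewrite sumZ_add, IHj. simpl sumN. f_equal. f_equal. lia.
Qed.

Lemma sumZ_ext f g t0 N : (forall t, f t = g t) -> sumZ f t0 N = sumZ g t0 N.
Proof. intros H. unfold sumZ. apply sumN_ext. intros; auto. Qed.

Lemma sumZ_nonneg f t0 N : (forall t, 0 <= f t) -> 0 <= sumZ f t0 N.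
Proof. intros H. apply sumN_nonneg. intros; auto. Qed.

Lemma sumZ_mult_periods f Tn (Hper : periodic f (Z.of_nat Tn)) t0 a :
  sumZ f t0 (a * Tn) = INR a * sumZ f 0 Tn.
Proof.
  induction a. simpl. unfold sumZ; simpl; lra.
  replace (S a * Tn)%nat with (a * Tn + Tn)%nat by lia.
  rewrite sumZ_add, IHa, (window_const f Tn Hper (t0 + Z.of_nat (a * Tn))%Z). rewrite S_INR. lra.
Qed.

Lemma per_sum_bound f (Tn : nat) : (0 < Tn)%nat -> periodic f (Z.of_nat Tn) -> (forall t, 0 <= f t) ->
  forall t0 N, Rabs (sumZ f t0 N - INR N * sumZ f 0 Tn / INR Tn) <= sumZ f 0 Tn.
Proof.
  intros HT Hper Hnn t0 N.
  set (r := sumZ f 0 Tn).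
  assert (Hr : 0 <= r) by (apply sumZ_nonneg; auto).
  pose proof (Nat.div_mod N Tn ltac:(lia)) as Hdm.
  set (a := (N / Tn)%nat) in *. set (b := (N mod Tn)%nat) in *.
  assert (Hb : (b < Tn)%nat) by (apply Nat.mod_upper_bound; lia).
  rewrite Hdm. rewrite Nat.mul_comm. rewrite sumZ_add, sumZ_mult_periods by auto. fold r.
  set (s := sumZ f (t0 + Z.of_nat (a * Tn))%Z b).
  assert (Hs0 : 0 <= s) by (apply sumZ_nonneg; auto).
  assert (Hs1 : s <= r).
  { unfold s, r. rewrite <- (window_const f Tn Hper (t0 + Z.of_nat (a * Tn))%Z).
    unfold sumZ. apply sumN_mono_len. lia. intros; auto. }
  assert (HTp : 0 < INR Tn) by (apply lt_0_INR; lia).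
  rewrite plus_INR, mult_INR.
  assert (Hbr : 0 <= INR b * r / INR Tn <= r).
  { split. apply Rmult_le_pos; [apply Rmult_le_pos; [apply pos_INR|lra]|left; apply Rinv_0_lt_compat; lra].
    apply Rmult_le_reg_r with (INR Tn); auto. unfold Rdiv. rewrite Rmult_assoc, Rinv_l by lra.
    assert (INR b <= INR Tn) by (apply le_INR; lia). nra. }
  replace ((INR a * INR Tn + INR b) * r / INR Tn) with (INR a * r + INR b * r / INR Tn) by (field; lra).
  apply Rabs_le. lra.
Qed.

Lemma periodic_1_const F : periodic F 1 -> forall s, F s = F 0%Z.
Proof. intros H s. rewrite <- (periodic_mul F 1 H s 0). f_equal. lia. Qed.

Lemma crt_sum f g (Tn qn : nat) : (0 < Tn)%nat -> (0 < qn)%nat ->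
  periodic f (Z.of_nat Tn) -> periodic g (Z.of_nat qn) -> Z.gcd (Z.of_nat Tn) (Z.of_nat qn) = 1%Z ->
  sumZ (fun t => f t * g t) 0 (Tn * qn) = sumZ f 0 Tn * sumZ g 0 qn.
Proof.
  intros HT Hq Hf Hg Hgcd.
  set (T := Z.of_nat Tn). set (q := Z.of_nat qn).
  set (F := fun s => sumN (fun j => g (s + Z.of_nat j * T)%Z) qn).
  assert (FT : periodic F T).
  { intros s. unfold F.
    set (h := fun j : Z => g (s + j * T)%Z).
    assert (hper : periodic h q).
    { intros j. unfold h. replace (s + (j + q) * T)%Z with (s + j * T + T * q)%Z by ring.
      apply (periodic_mul g q Hg T). }
    transitivity (sumZ h 1 qn).
    { unfold sumZ. apply sumN_ext. intros. unfold h. f_equal. lia. }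
    rewrite window_const by auto. unfold sumZ. apply sumN_ext. intros. unfold h. f_equal. }
  assert (Fq : periodic F q).
  { intros s. unfold F. apply sumN_ext. intros. replace (s + q + Z.of_nat i * T)%Z with (s + Z.of_nat i * T + q)%Z by ring. apply Hg. }
  assert (F1 : periodic F 1).
  { assert (Hg1 : Zis_gcd T q 1) by (rewrite <- Hgcd; apply Zgcd_is_gcd).
    intros s. destruct (Zis_gcd_bezout _ _ _ Hg1) as [a b Hab].
    replace (s + 1)%Z with (s + a * T + b * q)%Z by lia.
    rewrite (periodic_mul F q Fq b). apply (periodic_mul F T FT a). }
  assert (Fc : forall s, F s = sumZ g 0 qn).
  { intros s. rewrite (periodic_1_const F F1 s).
    assert (Hsum : sumN (fun s => F (Z.of_nat s)) qn = INR qn * F 0%Z).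
    { rewrite <- sumN_const. apply sumN_ext. intros. apply periodic_1_const; auto. }
    unfold F at 1 in Hsum.
    rewrite <- sumN_swap in Hsum.
    assert (Hq' : sumN (fun j => sumN (fun s => g (Z.of_nat s + Z.of_nat j * T)%Z) qn) qn = INR qn * sumZ g 0 qn).
    { rewrite <- sumN_const. apply sumN_ext. intros j _.
      rewrite <- (window_const g qn Hg (Z.of_nat j * T)). unfold sumZ. apply sumN_ext. intros. f_equal. lia. }
    rewrite Hq' in Hsum. assert (0 < INR qn) by (apply lt_0_INR; lia). nra. }
  rewrite Nat.mul_comm, sumZ_blocks.
  transitivity (sumN (fun j => sumN (fun s => f (Z.of_nat s) * g (Z.of_nat s + Z.of_nat j * T)%Z) Tn) qn).
  { apply sumN_ext. intros j _. unfold sumZ. apply sumN_ext. intros s _.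
    replace (0 + Z.of_nat j * Z.of_nat Tn + Z.of_nat s)%Z with (Z.of_nat s + Z.of_nat j * T)%Z by (unfold T; ring).
    f_equal. apply (periodic_mul f T Hf). }
  rewrite sumN_swap.
  transitivity (sumN (fun s => f (Z.of_nat s) * sumZ g 0 qn) Tn).
  { apply sumN_ext. intros s _. rewrite sumN_scal. rewrite <- (Fc (Z.of_nat s)). reflexivity. }
  rewrite (Rmult_comm (sumZ f 0 Tn)). transitivity (sumN (fun s => sumZ g 0 qn * f (Z.of_nat s)) Tn). apply sumN_ext; intros; ring. rewrite sumN_scal. reflexivity.
Qed.

Open Scope R_scope.

Definition ind (b : bool) : R := if b then 1 else 0.

Lemma ind_01 b : 0 <= ind b <= 1.
Proof. destruct b; simpl; lra. Qed.

Fixpoint Tfun (Q : list Z) (a : Z -> R) (L : nat) : R :=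
  match Q with
  | nil => match L with O => 0 | S _ => 1 end
  | q :: Q' => match L with O => 0 | S L' => Tfun Q' a L - a q * Tfun Q' a L' end
  end.

Fixpoint Ufun (Q : list Z) (rho : Z -> R) (L : nat) : R :=
  match Q with
  | nil => match L with O => 0 | S _ => 1 end
  | q :: Q' => match L with O => 0 | S L' => Ufun Q' rho L + rho q * Ufun Q' rho L' end
  end.

Definition pairwise_coprime (Q : list Z) :=
  NoDup Q /\ forall x y, In x Q -> In y Q -> x <> y -> Z.gcd x y = 1%Z.

Lemma pc_tail q Q : pairwise_coprime (q :: Q) -> pairwise_coprime Q.
Proof. intros [H1 H2]. inversion H1; subst. split; auto. intros; apply H2; simpl; auto. Qed.

Lemma gcd_mul_1 a b c : Z.gcd a c = 1%Z -> Z.gcd b c = 1%Z -> Z.gcd (a * b) c = 1%Z.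
Proof.
  intros H1 H2. apply Zgcd_1_rel_prime. apply rel_prime_sym. apply rel_prime_mult; apply rel_prime_sym; apply Zgcd_1_rel_prime; auto.
Qed.

Lemma periodic_multiple f T k : periodic f T -> periodic f (k * T).
Proof. intros H t. apply (periodic_mul f T H). Qed.

Definition rho (bad : Z -> Z -> bool) (q : Z) : R := sumZ (fun t => ind (bad q t)) 0 (Z.to_nat q).
Definition gq (bad : Z -> Z -> bool) (q : Z) : R := rho bad q / IZR q.
Definition at_ (bad : Z -> Z -> bool) (t : Z) : Z -> R := fun q => ind (bad q t).

Lemma sieve_main (bad : Z -> Z -> bool) (Q : list Z) :
  (forall q, In q Q -> (0 < q)%Z /\ periodic (fun t => ind (bad q t)) q) ->
  pairwise_coprime Q ->
  forall L f (Tn : nat), (0 < Tn)%nat -> periodic f (Z.of_nat Tn) -> (forall t, 0 <= f t) ->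
  (forall q, In q Q -> Z.gcd (Z.of_nat Tn) q = 1%Z) ->
  forall t0 N,
  Rabs (sumZ (fun t => f t * Tfun Q (at_ bad t) L) t0 N
        - INR N * (sumZ f 0 Tn / INR Tn) * Tfun Q (gq bad) L)
  <= sumZ f 0 Tn * Ufun Q (rho bad) L.
Proof.
  induction Q as [|q Q IH]; intros HQ Hpc L f Tn HT Hper Hnn Hgcd t0 N.
  - destruct L; simpl.
    + unfold sumZ. rewrite (sumN_ext _ (fun _ => 0)) by (intros; lra). rewrite sumN_const.
      rewrite !Rmult_0_r, Rminus_0_r, Rabs_R0. lra.
    + rewrite (sumZ_ext _ f) by (intros; lra). rewrite Rmult_1_r, Rmult_1_r.
      replace (INR N * (sumZ f 0 Tn / INR Tn)) with (INR N * sumZ f 0 Tn / INR Tn) by (unfold Rdiv; ring).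
      apply per_sum_bound; auto.
  - assert (HQ' : forall q', In q' Q -> (0 < q')%Z /\ periodic (fun t => ind (bad q' t)) q') by (intros; apply HQ; simpl; auto).
    assert (Hpc' := pc_tail _ _ Hpc).
    destruct (HQ q (or_introl eq_refl)) as [Hq0 Hqper].
    destruct L as [|L].
    + simpl. unfold sumZ. rewrite (sumN_ext _ (fun _ => 0)) by (intros; lra). rewrite sumN_const.
      rewrite !Rmult_0_r, Rminus_0_r, Rabs_R0. lra.
    + simpl Tfun. simpl Ufun.
      set (qn := Z.to_nat q).
      assert (Hqn : Z.of_nat qn = q) by (unfold qn; lia).
      set (f' := fun t => f t * ind (bad q t)).
      assert (Hf'per : periodic f' (Z.of_nat (Tn * qn))).
      { intros t. unfold f'. rewrite Nat2Z.inj_mul, Hqn.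
        f_equal. replace (Z.of_nat Tn * q)%Z with (q * Z.of_nat Tn)%Z by ring. apply (periodic_multiple _ _ q Hper).
        apply (periodic_multiple (fun t => ind (bad q t)) q (Z.of_nat Tn) Hqper). }
      assert (Hf'nn : forall t, 0 <= f' t) by (intros; unfold f'; pose proof (ind_01 (bad q t)); pose proof (Hnn t); nra).
      assert (Hgcd' : forall q', In q' Q -> Z.gcd (Z.of_nat (Tn * qn)) q' = 1%Z).
      { intros q' Hq'. rewrite Nat2Z.inj_mul, Hqn. apply gcd_mul_1. apply Hgcd; simpl; auto.
        destruct Hpc as [Hnd Hcop]. apply Hcop; simpl; auto. intro Heq. inversion Hnd as [|? ? Hni]. apply Hni. rewrite Heq. exact Hq'. }
      assert (Hr' : sumZ f' 0 (Tn * qn) = sumZ f 0 Tn * rho bad q).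
      { unfold f', rho. fold qn. apply crt_sum; auto. lia. rewrite Hqn; auto.
        rewrite Hqn. apply Hgcd; simpl; auto. }
      pose proof (IH HQ' Hpc' (S L) f Tn HT Hper Hnn ltac:(intros; apply Hgcd; simpl; auto) t0 N) as E1.
      pose proof (IH HQ' Hpc' L f' (Tn * qn)%nat ltac:(lia) Hf'per Hf'nn Hgcd' t0 N) as E2.
      rewrite Hr' in E2.
      assert (Hsplit : sumZ (fun t => f t * (Tfun Q (at_ bad t) (S L) - at_ bad t q * Tfun Q (at_ bad t) L)) t0 N
         = sumZ (fun t => f t * Tfun Q (at_ bad t) (S L)) t0 N - sumZ (fun t => f' t * Tfun Q (at_ bad t) L) t0 N).
      { unfold sumZ. rewrite <- sumN_minus. apply sumN_ext. intros. unfold f', at_. ring. }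
      rewrite Hsplit.
      assert (HINR : INR (Tn * qn) = INR Tn * IZR q).
      { rewrite mult_INR. f_equal. rewrite INR_IZR_INZ. rewrite Hqn. auto. }
      rewrite HINR in E2.
      assert (HTp : 0 < INR Tn) by (apply lt_0_INR; lia).
      assert (Hqp : 0 < IZR q) by (apply IZR_lt; lia).
      set (A1 := sumZ (fun t => f t * Tfun Q (at_ bad t) (S L)) t0 N) in *.
      set (A2 := sumZ (fun t => f' t * Tfun Q (at_ bad t) L) t0 N) in *.
      set (r := sumZ f 0 Tn) in *.
      replace (INR N * (r * rho bad q / (INR Tn * IZR q)) * Tfun Q (gq bad) L)
        with (INR N * (r / INR Tn) * (gq bad q * Tfun Q (gq bad) L)) in E2 by (unfold gq; field; lra).
      eapply Rle_trans; [|right; symmetry; apply Rmult_plus_distr_l].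
      rewrite <- Rmult_assoc.
      rewrite <- Rabs_Ropp in E2.
      eapply Rle_trans; [|apply Rplus_le_compat; [exact E1|exact E2]].
      eapply Rle_trans; [|apply Rabs_triang].
      right. f_equal. ring.
Qed.

Open Scope R_scope.

Fixpoint Efun (Q : list Z) (a : Z -> R) (L : nat) : R :=
  match Q with
  | nil => match L with O => 1 | S _ => 0 end
  | q :: Q' => match L with O => 1 | S L' => Efun Q' a L + a q * Efun Q' a L' end
  end.

Fixpoint Pr (Q : list Z) (a : Z -> R) : R :=
  match Q with nil => 1 | q :: Q' => (1 - a q) * Pr Q' a end.

Fixpoint Ssum (Q : list Z) (a : Z -> R) : R :=
  match Q with nil => 0 | q :: Q' => a q + Ssum Q' a end.

Lemma Ssum_nonneg Q a : (forall q, In q Q -> 0 <= a q) -> 0 <= Ssum Q a.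
Proof. induction Q; simpl; intros H. lra.
  assert (IH := IHQ ltac:(intros; apply H; simpl; auto)). pose proof (H a0 (or_introl eq_refl)). lra. Qed.

Lemma Pr_01 Q a : (forall q, In q Q -> 0 <= a q <= 1) -> 0 <= Pr Q a <= 1.
Proof. induction Q; simpl; intros H. lra.
  assert (IH := IHQ ltac:(intros; apply H; simpl; auto)). pose proof (H a0 (or_introl eq_refl)). nra. Qed.

Lemma Efun_nonneg Q a L : (forall q, In q Q -> 0 <= a q) -> 0 <= Efun Q a L.
Proof. revert L; induction Q; intros L H; destruct L; simpl; try lra.
  assert (H1 := IHQ (S L) ltac:(intros; apply H; simpl; auto)). assert (H2 := IHQ L ltac:(intros; apply H; simpl; auto)).
  pose proof (H a0 (or_introl eq_refl)). nra. Qed.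

Lemma bonf Q a : (forall q, In q Q -> 0 <= a q <= 1) -> forall L,
  if Nat.even L then Pr Q a - Efun Q a L <= Tfun Q a L <= Pr Q a
  else Pr Q a <= Tfun Q a L <= Pr Q a + Efun Q a L.
Proof.
  induction Q as [|q Q IH]; intros H L.
  - destruct L; simpl. lra. change (if Nat.even (S L) then 1 - 0 <= 1 <= 1 else 1 <= 1 <= 1 + 0); destruct (Nat.even (S L)); lra.
  - assert (H' : forall q', In q' Q -> 0 <= a q' <= 1) by (intros; apply H; simpl; auto).
    pose proof (H q (or_introl eq_refl)) as Hq.
    pose proof (Pr_01 Q a H') as HP.
    destruct L as [|L].
    + simpl. nra.
    + pose proof (IH H' (S L)) as I1. pose proof (IH H' L) as I2.
      rewrite Nat.even_succ, <- Nat.negb_even in *. simpl Tfun. simpl Efun. simpl Pr.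
      destruct (Nat.even L); simpl in *; nra.
Qed.

Lemma Pr_ind Q t bad : Pr Q (at_ bad t) = ind (forallb (fun q => negb (bad q t)) Q).
Proof. induction Q; simpl. auto. rewrite IHQ. unfold at_. destruct (bad a t); simpl; unfold ind; destruct forallb; lra. Qed.

Lemma bern x y m : 0 <= x -> 0 <= y -> x ^ (S m) + INR (S m) * y * x ^ m <= (x + y) ^ (S m).
Proof.
  intros Hx Hy. induction m.
  - simpl. lra.
  - rewrite S_INR in *. change ((x + y) ^ S (S m)) with ((x + y) * (x + y) ^ S m).
    change (x ^ S (S m)) with (x * x ^ S m). change (x ^ S m) with (x * x ^ m) in *.
    assert (0 <= x ^ m) by (apply pow_le; auto). assert (0 <= INR m) by apply pos_INR.
    set (P := x ^ m) in *.
    assert (0 <= (INR m + 1) * (y * y * P)) by (apply Rmult_le_pos; [lra|apply Rmult_le_pos; nra]).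
    apply Rle_trans with ((x + y) * (x * P + (INR m + 1) * y * P)). 2:{ apply Rmult_le_compat_l; lra. } rewrite S_INR. replace ((x + y) * (x * P + (INR m + 1) * y * P)) with (x * (x * P) + (INR m + 1 + 1) * y * (x * P) + (INR m + 1) * (y * y * P)) by ring. lra.
Qed.

Lemma Efun_bound Q a L : (forall q, In q Q -> 0 <= a q) -> Efun Q a L <= (Ssum Q a) ^ L / INR (fact L).
Proof.
  revert L; induction Q as [|q Q IH]; intros L H.
  - destruct L; simpl. lra. rewrite Rmult_0_l. unfold Rdiv. lra.
  - assert (H' : forall q', In q' Q -> 0 <= a q') by (intros; apply H; simpl; auto).
    pose proof (H q (or_introl eq_refl)) as Hq.
    destruct L as [|L]. simpl. lra.
    simpl Efun. simpl Ssum.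
    pose proof (IH (S L) H') as I1. pose proof (IH L H') as I2.
    assert (HS : 0 <= Ssum Q a) by (apply Ssum_nonneg; auto).
    pose proof (bern (Ssum Q a) (a q) L HS Hq) as Hb.
    assert (Hf : INR (fact (S L)) = INR (S L) * INR (fact L)) by (rewrite fact_simpl, mult_INR; auto).
    assert (0 < INR (fact L)) by (apply lt_0_INR, lt_O_fact).
    assert (0 < INR (S L)) by (apply lt_0_INR; lia).
    apply Rle_trans with (Ssum Q a ^ S L / INR (fact (S L)) + a q * (Ssum Q a ^ L / INR (fact L))).
    { apply Rplus_le_compat; auto. apply Rmult_le_compat_l; auto. }
    rewrite Hf. apply Rmult_le_reg_r with (INR (S L) * INR (fact L)). nra.
    unfold Rdiv. rewrite Rmult_plus_distr_r.
    replace (Ssum Q a ^ S L * / (INR (S L) * INR (fact L)) * (INR (S L) * INR (fact L))) with (Ssum Q a ^ S L) by (field; lra).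
    replace (a q * (Ssum Q a ^ L * / INR (fact L)) * (INR (S L) * INR (fact L))) with (INR (S L) * a q * Ssum Q a ^ L) by (field; lra).
    replace ((a q + Ssum Q a) ^ S L * / (INR (S L) * INR (fact L)) * (INR (S L) * INR (fact L))) with ((a q + Ssum Q a) ^ S L) by (field; lra).
    replace (a q + Ssum Q a) with (Ssum Q a + a q) by ring. lra.
Qed.

Lemma Ufun_bound Q rh L : (forall q, In q Q -> 0 <= rh q) -> Ufun Q rh L <= (1 + Ssum Q rh) ^ L.
Proof.
  revert L; induction Q as [|q Q IH]; intros L H.
  - destruct L; simpl. lra. rewrite Rplus_0_r, pow1. lra.
  - assert (H' : forall q', In q' Q -> 0 <= rh q') by (intros; apply H; simpl; auto).
    pose proof (H q (or_introl eq_refl)) as Hq.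
    assert (HS : 0 <= Ssum Q rh) by (apply Ssum_nonneg; auto).
    destruct L as [|L]. simpl. lra.
    simpl Ufun. simpl Ssum.
    pose proof (IH (S L) H') as I1. pose proof (IH L H') as I2.
    pose proof (bern (1 + Ssum Q rh) (rh q) L ltac:(lra) Hq) as Hb.
    assert (1 <= INR (S L)) by (rewrite S_INR; pose proof (pos_INR L); lra).
    assert (0 <= (1 + Ssum Q rh) ^ L) by (apply pow_le; lra).
    replace (1 + (rh q + Ssum Q rh)) with (1 + Ssum Q rh + rh q) by ring.
    assert (rh q * Ufun Q rh L <= INR (S L) * rh q * (1 + Ssum Q rh) ^ L).
    { apply Rle_trans with (rh q * (1 + Ssum Q rh) ^ L). apply Rmult_le_compat_l; auto.
      assert (0 <= rh q * (1 + Ssum Q rh) ^ L) by (apply Rmult_le_pos; auto). nra. }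
    lra.
Qed.

Lemma fact_bound L : INR L ^ L <= exp (INR L) * INR (fact L).
Proof.
  induction L.
  - simpl. rewrite exp_0. lra.
  - assert (Hm : INR (S L) ^ L <= exp 1 * INR L ^ L).
    { destruct L. simpl. pose proof (exp_ineq1_le 1). lra.
      set (m := INR (S L)).
      assert (Hm : 0 < m) by (unfold m; apply lt_0_INR; lia).
      assert (Em : INR (S (S L)) = m + 1) by (unfold m; apply S_INR). rewrite Em. replace (m + 1) with (m * (1 + / m)) by (field; lra).
      rewrite Rpow_mult_distr. rewrite Rmult_comm. apply Rmult_le_compat_r. apply pow_le; lra.
      pose proof (exp_ineq1_le (/ m)).
      apply Rle_trans with (exp (/ m) ^ S L).
      apply pow_incr. split; auto. assert (0 < / m) by (apply Rinv_0_lt_compat; lra). lra.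
      rewrite <- Rpower_pow by apply exp_pos. unfold Rpower. rewrite ln_exp.
      unfold m. right. f_equal. field. apply not_0_INR. lia. }
    change (INR (S L) ^ S L) with (INR (S L) * INR (S L) ^ L).
    rewrite S_INR at 3. rewrite exp_plus. rewrite fact_simpl, mult_INR.
    assert (0 < INR (S L)) by (apply lt_0_INR; lia).
    assert (0 < exp 1) by apply exp_pos.
    apply Rle_trans with (INR (S L) * (exp 1 * INR L ^ L)). apply Rmult_le_compat_l; lra.
    apply Rle_trans with (INR (S L) * (exp 1 * (exp (INR L) * INR (fact L)))).
    apply Rmult_le_compat_l. lra. apply Rmult_le_compat_l; lra.
    right. ring.
Qed.

Lemma exp_le x y : x <= y -> exp x <= exp y.
Proof. intros [H|H]. left; apply exp_increasing; auto. subst; lra. Qed.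

Lemma one_minus_exp x d q : 0 <= d -> d + 1 <= q -> 0 <= x <= d / q ->
  exp (- (d * (d + 1) / q)) <= 1 - x.
Proof.
  intros Hd Hq Hx.
  assert (Hq0 : 0 < q) by lra.
  assert (Hqd : 0 < q - d) by lra.
  apply Rle_trans with (exp (- (d / (q - d)))).
  { apply exp_le. apply Ropp_le_contravar. unfold Rdiv.
    apply Rmult_le_reg_r with (q * (q - d)). nra.
    replace (d * / (q - d) * (q * (q - d))) with (d * q) by (field; lra).
    replace (d * (d + 1) * / q * (q * (q - d))) with (d * (d + 1) * (q - d)) by (field; lra).
    nra. }
  apply Rle_trans with ((q - d) / q).
  { rewrite exp_Ropp. pose proof (exp_ineq1_le (d / (q - d))).
    replace ((q - d) / q) with (/ (1 + d / (q - d))) by (field; lra).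
    assert (0 <= d / (q - d)) by (unfold Rdiv; apply Rmult_le_pos; [lra| left; apply Rinv_0_lt_compat; lra]). apply Rinv_le_contravar; [lra|auto]. }
  replace ((q - d) / q) with (1 - d / q) by (field; lra). lra.
Qed.

Lemma Pr_lower Q a (c : Z -> R) : (forall q, In q Q -> exp (- c q) <= 1 - a q /\ a q <= 1) ->
  exp (- Ssum Q c) <= Pr Q a.
Proof.
  induction Q; intros H; simpl. rewrite Ropp_0, exp_0. lra.
  destruct (H a0 (or_introl eq_refl)) as [H1 H2].
  assert (IH := IHQ ltac:(intros; apply H; simpl; auto)).
  rewrite Ropp_plus_distr, exp_plus. apply Rmult_le_compat; auto; left; apply exp_pos.
Qed.

Open Scope Z_scope.

Fixpoint binom (n k : nat) : nat :=
  match n, k with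
  | _, O => 1%nat
  | O, S _ => 0%nat
  | S n', S k' => (binom n' k' + binom n' (S k'))%nat
  end.

Lemma binom_0 n k : (n < k)%nat -> binom n k = 0%nat.
Proof. revert k; induction n; intros k H; destruct k as [|k]; simpl; try lia. rewrite !IHn; lia. Qed.

Lemma binom_le_pow n k : (binom n k <= 2 ^ n)%nat.
Proof. revert k; induction n; intros k; destruct k as [|k]; simpl binom.
  simpl; lia. simpl; lia. pose proof (Nat.pow_nonzero 2 (S n)). lia.
  pose proof (IHn k). pose proof (IHn (S k)). rewrite Nat.pow_succ_r'. lia. Qed.

Lemma binom_fact n k : (k <= n)%nat -> (binom n k * fact k * fact (n - k) = fact n)%nat.
Proof.
  revert k; induction n; intros k Hk.
  - destruct k; simpl; lia.
  - destruct k as [|k].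
    + simpl binom. rewrite Nat.sub_0_r. simpl fact at 1. lia.
    + simpl binom. replace (S n - S k)%nat with (n - k)%nat by lia.
      destruct (Nat.eq_dec k n) as [->|Hne].
      * rewrite (binom_0 n (S n)) by lia. rewrite Nat.sub_diag. pose proof (IHn n (le_n n)) as I.
        rewrite Nat.sub_diag in I. simpl fact at 3. simpl fact at 1. nia.
      * pose proof (IHn k ltac:(lia)) as I1. pose proof (IHn (S k) ltac:(lia)) as I2.
        replace (n - k)%nat with (S (n - S k)) by lia.
        replace (n - k)%nat with (S (n - S k)) in I1 by lia.
        rewrite fact_simpl in I1. rewrite !fact_simpl.
        replace (S (n - S k)) with (n - k)%nat in * by lia.
        assert (fact (S n) = S n * fact n)%nat by apply fact_simpl.
        change (fact (S n)) with (S n * fact n)%nat.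
        rewrite fact_simpl in I2.
        assert (Hm : (n - k + S k = S n)%nat) by lia.
        set (m := (n - k)%nat) in *. set (A := fact k) in *. set (B := fact (n - S k)) in *.
        rewrite <- Hm, Nat.mul_add_distr_r. transitivity (S k * (binom n k * A * (m * B)) + m * (binom n (S k) * (S k * A) * B))%nat. ring. rewrite I1, I2. ring.
Qed.

Lemma divide_fact (p : Z) (n : nat) : 1 <= p <= Z.of_nat n -> (p | Z.of_nat (fact n)).
Proof.
  induction n; intros H. lia.
  rewrite fact_simpl, Nat2Z.inj_mul.
  destruct (Z.eq_dec p (Z.of_nat (S n))) as [->|Hne].
  - apply Z.divide_mul_l. apply Z.divide_refl.
  - apply Z.divide_mul_r. apply IHn. lia.
Qed.

Lemma not_divide_fact (p : Z) (n : nat) : prime p -> Z.of_nat n < p -> ~ (p | Z.of_nat (fact n)).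
Proof.
  intros Hp. induction n; intros H Hd.
  - simpl in Hd. apply Z.divide_1_r in Hd. destruct Hp. lia.
  - rewrite fact_simpl, Nat2Z.inj_mul in Hd. apply prime_mult in Hd; auto.
    destruct Hd as [Hd|Hd].
    + apply Z.divide_pos_le in Hd; lia.
    + apply IHn; auto; lia.
Qed.

Lemma prime_divides_binom (p : Z) (Y : nat) : prime p -> Z.of_nat Y < p <= 2 * Z.of_nat Y ->
  (p | Z.of_nat (binom (2 * Y) Y)).
Proof.
  intros Hp H.
  pose proof (binom_fact (2 * Y) Y ltac:(lia)) as Hb.
  replace (2 * Y - Y)%nat with Y in Hb by lia.
  assert (Hd : (p | Z.of_nat (fact (2 * Y)))) by (apply divide_fact; destruct Hp; lia).
  rewrite <- Hb in Hd. rewrite !Nat2Z.inj_mul in Hd.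
  apply prime_mult in Hd; auto. destruct Hd as [Hd|Hd].
  - apply prime_mult in Hd; auto. destruct Hd as [Hd|Hd]; auto.
    exfalso; apply (not_divide_fact p Y); auto; lia.
  - exfalso; apply (not_divide_fact p Y); auto; lia.
Qed.

Lemma coprime_divide_mul a b n : Z.gcd a b = 1 -> (a | n) -> (b | n) -> (a * b | n).
Proof.
  intros Hg [k Hk] Hb. subst n.
  assert (Hbk : (b | k)).
  { apply Gauss with a. rewrite Z.mul_comm; auto. apply Zgcd_1_rel_prime. rewrite Z.gcd_comm; auto. }
  destruct Hbk as [m Hm]. subst. exists m. ring.
Qed.

Definition prodZl (M : list Z) : Z := fold_right Z.mul 1 M.

Lemma gcd_prod_1 q F : (forall x, In x F -> Z.gcd q x = 1) -> Z.gcd q (prodZl F) = 1.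
Proof.
  induction F; intros H; simpl. apply Z.gcd_1_r.
  apply Zgcd_1_rel_prime. apply rel_prime_mult; apply Zgcd_1_rel_prime. apply H; simpl; auto.
  apply IHF. intros; apply H; simpl; auto.
Qed.

Lemma prod_divides F n : NoDup F -> (forall x y, In x F -> In y F -> x <> y -> Z.gcd x y = 1) ->
  (forall x, In x F -> (x | n)) -> (prodZl F | n).
Proof.
  induction F as [|q F IH]; intros Hnd Hpc Hd; simpl.
  - apply Z.divide_1_l.
  - inversion Hnd; subst. apply coprime_divide_mul.
    + apply gcd_prod_1. intros x Hx. apply Hpc; simpl; auto. intro; subst; auto.
    + apply Hd; simpl; auto.
    + apply IH; auto. intros; apply Hpc; simpl; auto. intros; apply Hd; simpl; auto.
Qed.

Lemma prod_lower F Y : (forall x, In x F -> Y + 1 <= x) -> 0 <= Y -> (Y + 1) ^ Z.of_nat (length F) <= prodZl F.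
Proof.
  induction F as [|q F IH]; intros H HY. simpl. lia.
  change (prodZl (q::F)) with (q * prodZl F). change (length (q::F)) with (S (length F)).
  rewrite Nat2Z.inj_succ, Z.pow_succ_r by lia.
  assert (H1 : Y + 1 <= q) by (apply H; simpl; auto).
  assert (H2 := IH ltac:(intros; apply H; simpl; auto) HY).
  assert (0 <= (Y + 1) ^ Z.of_nat (length F)) by (apply Z.pow_nonneg; lia).
  nia.
Qed.

Lemma block_count F (Y : nat) : NoDup F -> (forall x y, In x F -> In y F -> x <> y -> Z.gcd x y = 1) ->
  (forall x, In x F -> prime x /\ Z.of_nat Y < x <= 2 * Z.of_nat Y) ->
  (Z.of_nat Y + 1) ^ Z.of_nat (length F) <= 2 ^ (2 * Z.of_nat Y).
Proof.
  intros Hnd Hpc HF.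
  apply Z.le_trans with (prodZl F).
  { apply prod_lower; [intros x Hx; destruct (HF x Hx); lia | lia]. }
  apply Z.le_trans with (Z.of_nat (binom (2 * Y) Y)).
  { apply Z.divide_pos_le.
    - pose proof (binom_fact (2 * Y) Y ltac:(lia)). assert (binom (2 * Y) Y <> 0%nat) by (intro Hz; rewrite Hz in H; rewrite !Nat.mul_0_l in H; pose proof (lt_O_fact (2*Y)); lia). lia.
    - apply prod_divides; auto. intros x Hx. destruct (HF x Hx). apply prime_divides_binom; auto. }
  pose proof (binom_le_pow (2 * Y) Y). apply Nat2Z.inj_le in H. rewrite Nat2Z.inj_pow in H.
  rewrite Nat2Z.inj_mul in H. exact H.
Qed.

Open Scope R_scope.

Lemma ln_le' x y : 0 < x -> x <= y -> ln x <= ln y.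
Proof. intros Hx [H|H]. left; apply ln_increasing; auto. subst; lra. Qed.

Lemma ln_le_sub1 x : 0 < x -> ln x <= x - 1.
Proof. intros Hx. pose proof (exp_ineq1_le (ln x)). rewrite exp_ln in H by auto. lra. Qed.

Lemma harmonic m : (1 <= m)%nat -> sumN (fun i => 1 / INR (S i)) m <= 1 + ln (INR m).
Proof.
  induction m; intros Hm. lia.
  destruct m. simpl. rewrite ln_1. lra.
  assert (IH := IHm ltac:(lia)). change (sumN (fun i => 1 / INR (S i)) (S (S m))) with
    (sumN (fun i => 1 / INR (S i)) (S m) + 1 / INR (S (S m))).
  set (a := INR (S m)) in *. assert (Ha : 0 < a) by (unfold a; apply lt_0_INR; lia).
  assert (Eb : INR (S (S m)) = a + 1) by (unfold a; apply S_INR). rewrite Eb.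
  assert (ln (a / (a + 1)) <= a / (a + 1) - 1) by (apply ln_le_sub1; apply Rdiv_lt_0_compat; lra).
  unfold Rdiv in H. rewrite ln_mult, ln_Rinv in H by (try apply Rinv_0_lt_compat; lra).
  replace (a * / (a + 1) - 1) with (- (1 / (a + 1))) in H by (field; lra). lra.
Qed.

Lemma Ssum_if Q (p : Z -> bool) f : Ssum Q (fun q => if p q then f q else 0) = Ssum (filter p Q) f.
Proof. induction Q; simpl; auto. destruct (p a); simpl; rewrite IHQ; lra. Qed.

Lemma Ssum_le_len F f c : (forall q, In q F -> f q <= c) -> Ssum F f <= INR (length F) * c.
Proof. induction F; intros H. simpl; lra. simpl Ssum. change (INR (length (a :: F))) with (INR (S (length F))). rewrite S_INR.
  pose proof (H a (or_introl eq_refl)). pose proof (IHF ltac:(intros; apply H; simpl; auto)). lra. Qed.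

Lemma Ssum_ext_in Q f g : (forall q, In q Q -> f q = g q) -> Ssum Q f = Ssum Q g.
Proof. induction Q; intros H; simpl; auto. rewrite (H a (or_introl eq_refl)), IHQ; auto. intros; apply H; simpl; auto. Qed.

Lemma Ssum_plus Q f g : Ssum Q (fun q => f q + g q) = Ssum Q f + Ssum Q g.
Proof. induction Q; simpl; lra. Qed.

Lemma Ssum_le Q f g : (forall q, In q Q -> f q <= g q) -> Ssum Q f <= Ssum Q g.
Proof. induction Q; intros H; simpl. lra. pose proof (H a (or_introl eq_refl)). pose proof (IHQ ltac:(intros; apply H; simpl; auto)). lra. Qed.

Lemma Ssum_sumN Q (h : nat -> Z -> R) J : Ssum Q (fun q => sumN (fun j => h j q) J) = sumN (fun j => Ssum Q (h j)) J.
Proof. induction Q; simpl. rewrite sumN_const; lra. rewrite IHQ, <- sumN_plus. auto. Qed.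

Definition blk (Q : list Z) (j : nat) : R :=
  Ssum Q (fun q => if andb (Z.of_nat (2 ^ j) <? q)%Z (q <=? 2 * Z.of_nat (2 ^ j))%Z then 1 / IZR q else 0).

Definition primeset (Q : list Z) := pairwise_coprime Q /\ forall q, In q Q -> prime q.

Lemma blk_count Q j : primeset Q ->
  let F := filter (fun q => andb (Z.of_nat (2 ^ j) <? q)%Z (q <=? 2 * Z.of_nat (2 ^ j))%Z) Q in
  ((Z.of_nat (2 ^ j) + 1) ^ Z.of_nat (length F) <= 2 ^ (2 * Z.of_nat (2 ^ j)))%Z /\
  blk Q j <= INR (length F) / (INR (2 ^ j) + 1).
Proof.
  intros [[Hnd Hpc] Hpr] F.
  assert (HF : forall x, In x F -> prime x /\ (Z.of_nat (2 ^ j) < x <= 2 * Z.of_nat (2 ^ j))%Z).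
  { intros x Hx. unfold F in Hx. apply filter_In in Hx. destruct Hx as [Hx Hb].
    apply andb_prop in Hb. destruct Hb as [H1 H2]. apply Z.ltb_lt in H1. apply Z.leb_le in H2. auto. }
  split.
  - apply block_count. apply NoDup_filter; auto.
    intros x y Hx Hy. unfold F in Hx, Hy. apply filter_In in Hx. apply filter_In in Hy. apply Hpc; tauto.
    auto.
  - unfold blk. rewrite Ssum_if. fold F. unfold Rdiv. rewrite <- (Rmult_1_l (/ (INR (2^j) + 1))).
    rewrite <- Rmult_assoc. rewrite Rmult_1_r. apply Ssum_le_len.
    intros q Hq. destruct (HF q Hq) as [_ [H1 _]].
    assert (IZR (Z.of_nat (2 ^ j)) + 1 <= IZR q) by (rewrite <- plus_IZR; apply IZR_le; lia).
    rewrite <- INR_IZR_INZ in H. assert (0 < INR (2^j)) by (apply lt_0_INR; apply Nat.neq_0_lt_0; apply Nat.pow_nonzero; lia).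
    unfold Rdiv. rewrite !Rmult_1_l. apply Rinv_le_contravar; lra.
Qed.

Lemma blk_bound0 Q : primeset Q -> blk Q 0 <= 1.
Proof.
  intros HQ. destruct (blk_count Q 0 HQ) as [H1 H2]. simpl in *.
  set (l := length _) in *.
  assert (Hl : (l <= 2)%nat).
  { destruct (le_lt_dec l 2); auto. exfalso.
    assert (2 ^ Z.of_nat 3 <= 2 ^ Z.of_nat l)%Z by (apply Z.pow_le_mono_r; lia). simpl in H. lia. }
  eapply Rle_trans; [exact H2|]. apply le_INR in Hl. simpl in Hl. lra.
Qed.

Lemma blk_bound Q j : primeset Q -> (1 <= j)%nat -> blk Q j <= 2 / INR j.
Proof.
  intros HQ Hj. destruct (blk_count Q j HQ) as [H1 H2].
  set (l := length _) in *.
  assert (Hl : (j * l <= 2 ^ (S j))%nat).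
  { assert (Hp : (2 ^ Z.of_nat (j * l) <= 2 ^ Z.of_nat (2 ^ S j))%Z).
    { rewrite Nat2Z.inj_mul, Z.pow_mul_r by lia.
      apply Z.le_trans with ((Z.of_nat (2 ^ j) + 1) ^ Z.of_nat l)%Z.
      - rewrite Nat2Z.inj_pow. apply Z.pow_le_mono_l. split. apply Z.pow_nonneg; lia. simpl (Z.of_nat 2). lia.
      - eapply Z.le_trans; [exact H1|]. rewrite Nat.pow_succ_r'. rewrite Nat2Z.inj_mul. apply Z.le_refl. }
    apply Z.pow_le_mono_r_iff in Hp; lia. }
  eapply Rle_trans; [exact H2|].
  assert (Hjp : 0 < INR j) by (apply lt_0_INR; lia).
  assert (Hp : 0 < INR (2 ^ j)) by (apply lt_0_INR; apply Nat.neq_0_lt_0; apply Nat.pow_nonzero; lia).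
  apply le_INR in Hl. rewrite mult_INR, pow_INR in Hl. rewrite pow_INR in *. simpl in Hl.
  change (INR 2) with 2 in *.
  apply Rle_trans with (INR l / 2 ^ j).
  { unfold Rdiv. apply Rmult_le_compat_l. apply pos_INR. apply Rinv_le_contravar; lra. }
  apply Rmult_le_reg_r with (INR j * 2 ^ j). nra.
  replace (INR l / 2 ^ j * (INR j * 2 ^ j)) with (INR j * INR l) by (field; lra).
  replace (2 / INR j * (INR j * 2 ^ j)) with (2 * 2 ^ j) by (field; lra). replace (1 + 1) with 2 in Hl by ring. lra.
Qed.

Lemma ln3_ge1' : 1 <= ln 3.
Proof. rewrite <- (ln_exp 1). apply ln_le'. apply exp_pos. apply exp_le_3. Qed.

Open Scope R_scope.

Definition tailf (J : nat) (q : Z) : R := if (Z.of_nat (2 ^ J) <? q)%Z then 1 / IZR q else 0.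
Definition blkf (j : nat) (q : Z) : R :=
  if andb (Z.of_nat (2 ^ j) <? q)%Z (q <=? 2 * Z.of_nat (2 ^ j))%Z then 1 / IZR q else 0.

Lemma decomp q J : (2 <= q)%Z -> 1 / IZR q = sumN (fun j => blkf j q) J + tailf J q.
Proof.
  intros Hq. induction J.
  - simpl. unfold tailf. simpl. destruct (1 <? q)%Z eqn:E. lra. apply Z.ltb_ge in E. lia.
  - simpl sumN. rewrite IHJ. unfold tailf, blkf.
    rewrite Nat.pow_succ_r', Nat2Z.inj_mul. simpl (Z.of_nat 2).
    destruct (Z.of_nat (2 ^ J) <? q)%Z eqn:E1; destruct (q <=? 2 * Z.of_nat (2 ^ J))%Z eqn:E2;
      destruct (2 * Z.of_nat (2 ^ J) <? q)%Z eqn:E3; simpl;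
      try apply Z.ltb_lt in E1; try apply Z.ltb_ge in E1;
      try apply Z.leb_le in E2; try apply Z.leb_gt in E2;
      try apply Z.ltb_lt in E3; try apply Z.ltb_ge in E3; try lia; lra.
Qed.

Definition Hsum (Q : list Z) : R := Ssum Q (fun q => 1 / IZR q).

Lemma tail_bound Q J : primeset Q -> Ssum Q (tailf J) <= INR (length Q) * (1 / (INR (2 ^ J) + 1)).
Proof.
  intros [_ Hpr]. unfold tailf. rewrite Ssum_if.
  assert (Hp : 0 < INR (2^J)) by (apply lt_0_INR; apply Nat.neq_0_lt_0; apply Nat.pow_nonzero; lia).
  apply Rle_trans with (INR (length (filter (fun q => (Z.of_nat (2 ^ J) <? q)%Z) Q)) * (1 / (INR (2 ^ J) + 1))).
  - apply Ssum_le_len. intros q Hq. apply filter_In in Hq. destruct Hq as [_ Hq]. apply Z.ltb_lt in Hq.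
    assert (IZR (Z.of_nat (2 ^ J)) + 1 <= IZR q) by (rewrite <- plus_IZR; apply IZR_le; lia).
    rewrite <- INR_IZR_INZ in H.
    unfold Rdiv. rewrite !Rmult_1_l. apply Rinv_le_contravar; lra.
  - apply Rmult_le_compat_r. unfold Rdiv; rewrite Rmult_1_l. left; apply Rinv_0_lt_compat. lra.
    apply le_INR. clear. induction Q; simpl; auto. destruct (_ <? _)%Z; simpl; lia.
Qed.

Lemma Hsum_split Q J : primeset Q -> Hsum Q = sumN (fun j => blk Q j) J + Ssum Q (tailf J).
Proof.
  intros HQ. unfold Hsum.
  rewrite (Ssum_ext_in Q (fun q => 1 / IZR q) (fun q => sumN (fun j => blkf j q) J + tailf J q)).
  rewrite Ssum_plus, Ssum_sumN. reflexivity.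
  intros q Hq. apply decomp. destruct HQ as [_ Hpr]. destruct (Hpr q Hq). lia.
Qed.

Lemma ln3_ge1 : 1 <= ln 3.
Proof. rewrite <- (ln_exp 1). apply ln_le'. apply exp_pos. apply exp_le_3. Qed.

Lemma H_bound Q : primeset Q -> (2 <= length Q)%nat ->
  Hsum Q <= 6 + 2 * ln (ln (INR (length Q) + 1)).
Proof.
  intros HQ Hn. set (n := length Q) in *.
  pose proof (Nat.log2_up_spec n ltac:(lia)) as [Hlo Hhi].
  set (J := Nat.log2_up n) in *.
  destruct J as [|J'] eqn:EJ. { simpl in Hhi. lia. }
  simpl pred in Hlo.
  rewrite (Hsum_split Q (S J') HQ).
  pose proof (tail_bound Q (S J') HQ) as Ht. fold n in Ht.
  assert (Hp : 0 < INR (2^(S J'))) by (apply lt_0_INR; apply Nat.neq_0_lt_0; apply Nat.pow_nonzero; lia).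
  assert (Ht1 : Ssum Q (tailf (S J')) <= 1).
  { eapply Rle_trans; [exact Ht|]. apply le_INR in Hhi.
    apply Rmult_le_reg_r with (INR (2 ^ S J') + 1). lra.
    unfold Rdiv. rewrite Rmult_assoc, Rmult_1_l, Rinv_l by lra. lra. }
  replace (S J') with (1 + J')%nat by lia. rewrite sumN_add. simpl sumN at 1.
  pose proof (blk_bound0 Q HQ) as B0.
  assert (Bs : sumN (fun i => blk Q (1 + i)) J' <= 2 * sumN (fun i => 1 / INR (S i)) J').
  { rewrite <- sumN_scal. apply sumN_le. intros i _. eapply Rle_trans. apply blk_bound; auto; lia.
    right. simpl (1 + i)%nat. unfold Rdiv. ring. }
  assert (Hn1 : 3 <= INR n + 1) by (apply le_INR in Hn; simpl in Hn; lra).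
  assert (Hl1 : 1 <= ln (INR n + 1)) by (eapply Rle_trans; [apply ln3_ge1|]; apply ln_le'; lra).
  assert (Hl0 : 0 <= ln (ln (INR n + 1))) by (rewrite <- ln_1; apply ln_le'; lra).
  destruct J' as [|J''].
  - simpl sumN in *. simpl (1 + 0)%nat. lra.
  - pose proof (harmonic (S J'') ltac:(lia)) as Hh.
    assert (HJ : INR (S J'') * ln 2 < ln (INR n + 1)).
    { rewrite <- ln_pow by lra. apply Rlt_le_trans with (ln (INR n)).
      apply ln_increasing. apply pow_lt; lra. rewrite <- (pow_INR 2). apply lt_INR. exact Hlo.
      apply ln_le'. apply lt_0_INR; lia. lra. }
    pose proof ln_lt_2 as Hl2.
    assert (Hl2' : ln 2 <= 1) by (pose proof (ln_le_sub1 2); lra).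
    assert (HJ2 : INR (S J'') <= 2 * ln (INR n + 1)).
    { assert (0 < INR (S J'')) by (apply lt_0_INR; lia). nra. }
    assert (Hlj : ln (INR (S J'')) <= 1 + ln (ln (INR n + 1))).
    { eapply Rle_trans. apply ln_le'. apply lt_0_INR; lia. exact HJ2.
      rewrite ln_mult by lra. lra. }
    simpl (1 + S J'')%nat. lra.
Qed.

Open Scope R_scope.

Lemma exp_ge_5_4 : (5/4) ^ 4 <= exp 1.
Proof.
  assert (H : 5/4 <= exp (1/4)) by (pose proof (exp_ineq1_le (1/4)); lra).
  replace (exp 1) with (exp (1/4) ^ 4).
  apply pow_incr. lra.
  rewrite <- Rpower_pow by apply exp_pos. unfold Rpower. rewrite ln_exp. f_equal. simpl. lra.
Qed.

Lemma ln2_le : ln 2 <= 4/5.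
Proof.
  assert (H : 2 ^ 5 <= exp 4).
  { replace (exp 4) with (exp 1 ^ 4).
    pose proof exp_ge_5_4. assert (((5/4)^4) ^ 4 <= exp 1 ^ 4) by (apply pow_incr; split; [simpl; lra| auto]).
    simpl in *. lra.
    rewrite <- Rpower_pow by apply exp_pos. unfold Rpower. rewrite ln_exp. f_equal. simpl. lra. }
  assert (ln (2 ^ 5) <= 4) by (rewrite <- (ln_exp 4); apply ln_le'; [simpl; lra| auto]).
  rewrite ln_pow in H0 by lra. simpl in H0. lra.
Qed.

Lemma beta_Z (D : nat) : (2 <= D)%nat -> (3 ^ (2 * Z.of_nat D + 3) <= (Z.of_nat D + 3) ^ (Z.of_nat D + 3))%Z.
Proof.
  intros HD.
  destruct (le_lt_dec D 5) as [H5|H5].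
  - destruct D as [|[|[|[|[|[|D]]]]]]; try lia; vm_compute; congruence.
  - apply Z.le_trans with (9 ^ (Z.of_nat D + 3))%Z.
    + replace 9%Z with (3 ^ 2)%Z by reflexivity. rewrite <- Z.pow_mul_r by lia.
      apply Z.pow_le_mono_r; lia.
    + apply Z.pow_le_mono_l; lia.
Qed.

Lemma beta_ln (D : nat) : (2 <= D)%nat -> 1 + INR D / (INR D + 3) <= ln (INR D + 3).
Proof.
  intros HD. pose proof (beta_Z D HD) as H.
  replace (2 * Z.of_nat D + 3)%Z with (Z.of_nat (2 * D + 3)) in H by lia.
  replace (Z.of_nat D + 3)%Z with (Z.of_nat (D + 3)) in H by lia.
  apply IZR_le in H. rewrite <- !pow_IZR in H.
  rewrite <- INR_IZR_INZ in H. rewrite plus_INR in H. simpl (IZR 3) in H.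
  replace (INR 3) with 3 in H by (simpl; lra).
  assert (HD' : 2 <= INR D) by (apply le_INR in HD; simpl in HD; lra).
  assert (Hl : ln (3 ^ (2 * D + 3)) <= ln ((INR D + 3) ^ (D + 3))) by (apply ln_le'; [apply pow_lt; lra|auto]).
  rewrite !ln_pow in Hl by lra. rewrite !plus_INR, mult_INR in Hl. simpl in Hl.
  pose proof ln3_ge1' as H3.
  apply Rmult_le_reg_l with (INR D + 3). lra.
  replace ((INR D + 3) * (1 + INR D / (INR D + 3))) with (2 * INR D + 3) by (field; lra).
  replace (1 + 1 + 1) with 3 in Hl by ring. replace (1 + 1) with 2 in Hl by ring.
  nra.
Qed.

Lemma tail_small (A Dr beta : R) (L : nat) : 0 <= A -> 2 <= Dr -> beta = Dr + 3 ->
  1 + Dr / beta <= ln beta -> beta * A + 2 <= INR L ->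
  A ^ L / INR (fact L) <= exp (- (Dr * A)) / 2.
Proof.
  intros HA HD Hb Hln HL.
  assert (HbA : 0 <= beta * A) by (apply Rmult_le_pos; lra). assert (HLp : 0 < INR L) by lra.
  assert (Hf : 0 < INR (fact L)) by (apply lt_0_INR, lt_O_fact).
  pose proof (fact_bound L) as HF.
  assert (HLL : 0 < INR L ^ L) by (apply pow_lt; lra).
  apply Rle_trans with ((exp 1 * A / INR L) ^ L).
  { unfold Rdiv. rewrite !Rpow_mult_distr. rewrite pow_inv.
    rewrite <- Rpower_pow with (x := exp 1) by apply exp_pos. unfold Rpower. rewrite ln_exp, Rmult_1_r.
    apply Rmult_le_reg_r with (INR (fact L) * INR L ^ L). nra.
    replace (A ^ L * / INR (fact L) * (INR (fact L) * INR L ^ L)) with (A ^ L * INR L ^ L) by (field; lra).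
    replace (exp (INR L) * A ^ L * / INR L ^ L * (INR (fact L) * INR L ^ L)) with (A ^ L * (exp (INR L) * INR (fact L))) by (field; lra).
    apply Rmult_le_compat_l. apply pow_le; auto. auto. }
  apply Rle_trans with ((exp 1 / beta) ^ L).
  { apply pow_incr. split. apply Rmult_le_pos. apply Rmult_le_pos; [left; apply exp_pos|auto]. left; apply Rinv_0_lt_compat; lra.
    unfold Rdiv. rewrite Rmult_assoc. apply Rmult_le_compat_l. left; apply exp_pos.
    apply Rmult_le_reg_r with (INR L * beta). nra.
    replace (A * / INR L * (INR L * beta)) with (beta * A) by (field; lra).
    replace (/ beta * (INR L * beta)) with (INR L) by (field; lra). lra. }
  replace (exp 1 / beta) with (exp (1 - ln beta)).
  2:{ unfold Rminus. rewrite exp_plus, exp_Ropp, exp_ln by lra. auto. }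
  rewrite <- Rpower_pow by apply exp_pos. unfold Rpower. rewrite ln_exp.
  replace (exp (- (Dr * A)) / 2) with (exp (- (Dr * A) - ln 2)).
  2:{ unfold Rminus. rewrite exp_plus, (exp_Ropp (ln 2)), exp_ln by lra. auto. }
  apply exp_le.
  pose proof ln2_le.
  assert (Hx : Dr / beta >= 2/5) by (rewrite Hb; apply Rle_ge; apply Rmult_le_reg_r with (Dr + 3); [lra|]; replace (Dr / (Dr + 3) * (Dr + 3)) with Dr by (field; lra); lra).
  assert (Hy : beta * A * (Dr / beta) = Dr * A) by (field; lra).
  assert (INR L * (ln beta - 1) >= (beta * A + 2) * (Dr / beta)).
  { apply Rle_ge. apply Rmult_le_compat; try lra. }
  nra.
Qed.

Open Scope R_scope.

Lemma numeric_core (D H Lm Lam X l3 : R) : (D = 2 \/ 3 <= D) -> 0 <= H -> 0 <= l3 <= 2 ->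
  0 <= Lm <= (D + 3) * (D - 1) * H + 4 ->
  ((H <= 1 / D /\ 1/2 <= Lam /\ 2 <= X) \/
   (H <= 2 * X /\ 3 <= X /\ 1 <= Lam /\ (3 <= D -> 3/2 <= Lam))) ->
  l3 + (D - 1) * D * H + Lm * Lam <= 4 * D ^ 2 * X * Lam.
Proof.
  intros HD' HH Hl3 [HL0 HL] [[H1 [H2 H3]]|[H1 [H2 [H3 H4]]]].
  assert (HD : 2 <= D) by lra.
  - assert (HDH : D * H <= 1) by (apply Rmult_le_reg_l with (/ D); [apply Rinv_0_lt_compat; lra|];
      rewrite <- Rmult_assoc, Rinv_l, Rmult_1_l by lra; unfold Rdiv in H1; lra).
    assert (HK : (D - 1) * D * H <= D - 1) by (rewrite Rmult_assoc; nra).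
    assert (HL' : Lm <= D + 7).
    { assert ((D + 3) * (D - 1) * H <= D + 3) by (replace ((D + 3) * (D - 1) * H) with ((D + 3) * ((D - 1) * H)) by ring;
        assert ((D-1) * H <= D * H) by nra; nra). lra. }
    assert (Lm * Lam <= (D + 7) * Lam) by nra.
    assert (4 * D ^ 2 * X * Lam >= 8 * D ^ 2 * Lam).
    { assert (0 <= D ^ 2 * Lam) by (apply Rmult_le_pos; [apply pow_le|]; lra).
      replace (4 * D ^ 2 * X * Lam) with (4 * X * (D ^ 2 * Lam)) by ring.
      replace (8 * D ^ 2 * Lam) with (8 * (D ^ 2 * Lam)) by ring. nra. }
    assert (Hc : 8 * D * D - D - 7 >= 2 * D + 2) by nra.
    assert ((8 * D * D - D - 7) * (1/2) <= (8 * D * D - D - 7) * Lam) by (apply Rmult_le_compat_l; [nra|lra]).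
    assert (8 * D ^ 2 * Lam - (D + 7) * Lam >= D + 1) by (simpl; nra).
    lra.
  - assert (HLL : Lm * Lam <= ((D + 3) * (D - 1) * (2 * X) + 4) * Lam).
    { apply Rmult_le_compat_r; [lra|]. assert ((D + 3) * (D - 1) * H <= (D + 3) * (D - 1) * (2 * X)).
      apply Rmult_le_compat_l; nra. lra. }
    assert (HK : (D - 1) * D * H <= (D - 1) * D * (2 * X)) by (apply Rmult_le_compat_l; nra).
    destruct (Rle_lt_dec 3 D) as [HD3|HD3].
    + specialize (H4 HD3).
      assert (2 * (D - 1) * D * X <= (4/3) * (D * D - D) * X * Lam).
      { assert (0 <= (D*D - D) * X) by (apply Rmult_le_pos; nra).
        assert ((4/3) * ((D*D - D) * X) * (3/2) <= (4/3) * ((D*D - D) * X) * Lam) by (apply Rmult_le_compat_l; lra).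
        nra. }
      set (c := 4 * D * D - 2 * (D + 3) * (D - 1) - (4/3) * (D * D - D)).
      assert (Hc : c >= 10/3) by (unfold c; nra).
      assert (10 / 3 * 3 * Lam <= c * X * Lam).
      { assert (10/3 * 3 <= c * X) by nra. apply Rmult_le_compat_r; lra. }
      assert (Heq : 4 * D ^ 2 * X * Lam = c * X * Lam + 2 * (D + 3) * (D - 1) * X * Lam + (4/3) * (D * D - D) * X * Lam) by (unfold c; simpl; ring).
      rewrite Heq.
      assert (((D + 3) * (D - 1) * (2 * X) + 4) * Lam = 2 * (D + 3) * (D - 1) * X * Lam + 4 * Lam) by ring.
      lra.
    + assert (HD2 : D = 2) by lra. subst D.
      assert (Hc : 6 * X * Lam >= 4 * X + 4 * Lam + 2) by nra.
      simpl. lra.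
Qed.

Open Scope R_scope.

Lemma sumZ_pos_exists (p : Z -> bool) t0 N : 0 < sumZ (fun t => ind (p t)) t0 N ->
  exists j, (j < N)%nat /\ p (t0 + Z.of_nat j)%Z = true.
Proof.
  induction N; intros H. unfold sumZ in H; simpl in H; lra.
  rewrite sumZ_S in H. cbv beta in H. destruct (p (t0 + Z.of_nat N)%Z) eqn:E.
  - exists N; split; auto.
  - change (ind false) with 0 in H. destruct IHN as [j [Hj Hp]]. lra. exists j; split; auto.
Qed.

Lemma sumZ_zero (p : Z -> bool) t0 N : (forall j, (j < N)%nat -> p (t0 + Z.of_nat j)%Z = false) ->
  sumZ (fun t => ind (p t)) t0 N = 0.
Proof. intros H. unfold sumZ. rewrite (sumN_ext _ (fun _ => 0)). rewrite sumN_const; lra.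
  intros i Hi. rewrite H; auto. Qed.

Lemma count_le_1 (p : Z -> bool) t0 N :
  (forall j1 j2, (j1 < N)%nat -> (j2 < N)%nat -> p (t0 + Z.of_nat j1)%Z = true -> p (t0 + Z.of_nat j2)%Z = true -> j1 = j2) ->
  sumZ (fun t => ind (p t)) t0 N <= 1.
Proof.
  induction N; intros H. unfold sumZ; simpl; lra.
  rewrite sumZ_S. cbv beta. destruct (p (t0 + Z.of_nat N)%Z) eqn:E.
  - rewrite sumZ_zero. change (ind true) with 1. lra.
    intros j Hj. destruct (p (t0 + Z.of_nat j)%Z) eqn:E2; auto. specialize (H j N ltac:(lia) ltac:(lia) E2 E). lia.
  - change (ind false) with 0. rewrite Rplus_0_r. apply IHN. intros; apply H; auto; lia.
Qed.

Fixpoint sumL (l : list nat) (g : nat -> R) : R :=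
  match l with nil => 0 | i :: l' => g i + sumL l' g end.

Lemma existsb_count (f : nat -> Z -> bool) l t0 N :
  sumZ (fun t => ind (existsb (fun i => f i t) l)) t0 N <= sumL l (fun i => sumZ (fun t => ind (f i t)) t0 N).
Proof.
  induction l; simpl.
  - unfold sumZ. apply Rle_trans with (sumN (fun _ => 0) N). apply sumN_le. intros; unfold ind; simpl; lra. rewrite sumN_const; lra.
  - eapply Rle_trans; [|apply Rplus_le_compat_l; exact IHl].
    unfold sumZ. rewrite <- sumN_plus. apply sumN_le. intros i _.
    unfold ind. destruct (f a _); destruct (existsb _ _); simpl; lra.
Qed.

Lemma sumL_const_le l (g : nat -> R) c : (forall i, In i l -> g i <= c) -> sumL l g <= INR (length l) * c.
Proof. induction l; intros H; simpl sumL. simpl; lra. change (length (a :: l)) with (S (length l)). rewrite S_INR.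
  pose proof (H a (or_introl eq_refl)). pose proof (IHl ltac:(intros; apply H; simpl; auto)). lra. Qed.

Definition prodZ' (M : list Z) : Z := fold_right Z.mul 1%Z M.

Lemma prodZ'_pos M : (forall m, In m M -> (0 < m)%Z) -> (0 < prodZ' M)%Z.
Proof. induction M; intros H; simpl. lia. pose proof (H a (or_introl eq_refl)). pose proof (IHM ltac:(intros; apply H; simpl; auto)). nia. Qed.

Lemma prodZ'_div M m : In m M -> (m | prodZ' M)%Z.
Proof. induction M; intros H; simpl in *. tauto. destruct H as [<-|H]. apply Z.divide_mul_l, Z.divide_refl.
  apply Z.divide_mul_r. auto. Qed.

Lemma gcd_prodZ'_1 q M : (forall m, In m M -> Z.gcd m q = 1%Z) -> Z.gcd (prodZ' M) q = 1%Z.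
Proof.
  induction M; intros H; simpl. apply Z.gcd_1_l.
  apply Zgcd_1_rel_prime. apply rel_prime_sym. apply rel_prime_mult; apply rel_prime_sym; apply Zgcd_1_rel_prime.
  apply H; simpl; auto. apply IHM. intros; apply H; simpl; auto.
Qed.

Lemma crt_list (M : list Z) (b : Z -> Z) : NoDup M ->
  (forall x y, In x M -> In y M -> x <> y -> Z.gcd x y = 1%Z) ->
  exists x0, forall m, In m M -> (m | x0 - b m)%Z.
Proof.
  induction M as [|m M IH]; intros Hnd Hpc.
  - exists 0%Z. intros m [].
  - inversion Hnd; subst.
    destruct IH as [x1 Hx1]; auto. intros; apply Hpc; simpl; auto.
    assert (Hg : Z.gcd m (prodZ' M) = 1%Z).
    { rewrite Z.gcd_comm. apply gcd_prodZ'_1. intros m' Hm'. apply Hpc; simpl; auto. intro; subst; auto. }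
    assert (Hg' : Zis_gcd m (prodZ' M) 1) by (rewrite <- Hg; apply Zgcd_is_gcd).
    destruct (Zis_gcd_bezout _ _ _ Hg') as [u v Huv].
    exists (x1 + v * prodZ' M * (b m - x1))%Z.
    intros m' [<-|Hm'].
    + exists ((x1 - b m) * u)%Z. replace (v * prodZ' M)%Z with (1 - u * m)%Z by lia. ring.
    + replace (x1 + v * prodZ' M * (b m - x1) - b m')%Z with ((x1 - b m') + v * prodZ' M * (b m - x1))%Z by ring.
      apply Z.divide_add_r. apply Hx1; auto.
      apply Z.divide_mul_l. apply Z.divide_mul_r. apply prodZ'_div; auto.
Qed.

Open Scope R_scope.

Lemma Ssum_scal Q (f : Z -> R) c : Ssum Q (fun q => c * f q) = c * Ssum Q f.
Proof. induction Q; simpl; [lra|rewrite IHQ; lra]. Qed.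

Lemma existsb_ext' {T} (f g : T -> bool) l : (forall x, f x = g x) -> existsb f l = existsb g l.
Proof. intros H; induction l; simpl; auto. rewrite H, IHl; auto. Qed.

Lemma ln_ge_half2 : 1/2 <= ln 2.
Proof. pose proof ln_lt_2. lra. Qed.

Lemma ln6_ge : 3/2 <= ln 6.
Proof.
  assert (H : 3 <= ln 27).
  { replace 27 with (3 ^ 3) by (simpl; lra). rewrite ln_pow by lra. pose proof ln3_ge1'. simpl. lra. }
  assert (ln 27 <= ln 36) by (apply ln_le'; lra).
  replace 36 with (6 ^ 2) in H0 by (simpl; lra). rewrite ln_pow in H0 by lra. simpl in H0. lra.
Qed.

Theorem theorem2 (d : nat) (M Q : list Z) (b : Z -> Z) (c : Z -> nat -> Z) :
  (0 < d)%nat ->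
  NoDup M -> NoDup Q -> Q <> nil ->
  (forall m, In m M -> (0 < m)%Z) ->
  (forall q, In q Q -> prime q) ->
  (forall x y, In x (M ++ Q) -> In y (M ++ Q) -> x <> y -> Z.gcd x y = 1%Z) ->
  (forall m, In m M -> ~ In m Q) ->
  (forall q, In q Q -> (Z.of_nat d < q)%Z) ->
  forall k : Z, exists x : Z,
    (k <= x)%Z /\
    (IZR x <= IZR k + IZR (prodZ M) * E_bound (length Q) d)%R /\
    (forall m, In m M -> (m | x - b m)%Z) /\
    (forall q i, In q Q -> (1 <= i <= d)%nat -> ~ (q | x - c q i)%Z).
Proof.
  intros Hd HndM HndQ HQne HMpos HQpr Hcop HMQ HQd k.
  set (P := prodZ M).
  assert (HP : (0 < P)%Z) by (apply (prodZ'_pos M HMpos)).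
  assert (HPdiv : forall m, In m M -> (m | P)%Z) by (intros; apply (prodZ'_div M m); auto).
  assert (HPq : forall q, In q Q -> Z.gcd P q = 1%Z).
  { intros q Hq. apply (gcd_prodZ'_1 q M). intros m Hm. apply Hcop; try (apply in_or_app; auto).
    intro; subst. apply (HMQ q Hm Hq). }
  destruct (crt_list M b HndM) as [x0 Hx0].
  { intros x y Hx Hy. apply Hcop; apply in_or_app; auto. }
  set (x1 := (k + (x0 - k) mod P)%Z).
  assert (Hx1a : (k <= x1 < k + P)%Z) by (unfold x1; pose proof (Z.mod_pos_bound (x0 - k) P HP); lia).
  assert (Hx1b : (P | x1 - x0)%Z).
  { exists (- ((x0 - k) / P))%Z. unfold x1. pose proof (Z_div_mod_eq_full (x0 - k) P). lia. }
  set (bad := fun q t => existsb (fun i => Z.eqb ((x1 + P * t - c q i) mod q) 0) (seq 1 d)).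
  assert (Hqpos : forall q, In q Q -> (0 < q)%Z) by (intros q Hq; pose proof (HQd q Hq); lia).
  assert (Hper : forall q, In q Q -> periodic (fun t => ind (bad q t)) q).
  { intros q Hq t. unfold bad. f_equal. apply existsb_ext'. intros i.
    replace (x1 + P * (t + q) - c q i)%Z with ((x1 + P * t - c q i) + P * q)%Z by ring.
    rewrite Z_mod_plus_full. reflexivity. }
  assert (Hpc : pairwise_coprime Q).
  { split; auto. intros x y Hx Hy. apply Hcop; apply in_or_app; auto. }
  assert (Hrho : forall q, In q Q -> 0 <= rho bad q <= INR d).
  { intros q Hq. split. apply sumZ_nonneg. intros; apply ind_01.
    unfold rho, bad.
    eapply Rle_trans. apply (existsb_count (fun i t => Z.eqb ((x1 + P * t - c q i) mod q) 0)).
    rewrite <- (length_seq d 1) at 2. rewrite <- (Rmult_1_r (INR (length (seq 1 d)))).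
    apply sumL_const_le. intros i _. apply count_le_1.
    intros j1 j2 Hj1 Hj2 E1 E2. apply Z.eqb_eq in E1. apply Z.eqb_eq in E2.
    pose proof (Hqpos q Hq) as Hq0.
    apply Zmod_divide in E1; [|lia]. apply Zmod_divide in E2; [|lia].
    assert (Hd12 : (q | P * (Z.of_nat j1 - Z.of_nat j2))%Z).
    { replace (P * (Z.of_nat j1 - Z.of_nat j2))%Z with ((x1 + P * (0 + Z.of_nat j1) - c q i) - (x1 + P * (0 + Z.of_nat j2) - c q i))%Z by ring.
      apply Z.divide_sub_r; auto. }
    apply Gauss in Hd12. 2:{ apply Zgcd_1_rel_prime. rewrite Z.gcd_comm. apply HPq; auto. }
    destruct Hd12 as [z Hz]. assert (Z.of_nat j1 < q)%Z by lia. assert (Z.of_nat j2 < q)%Z by lia.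
    assert (z = 0)%Z by nia. subst z. lia. }
  set (n := length Q).
  assert (Hn1 : (1 <= n)%nat) by (unfold n; destruct Q as [|q0 Q0]; [congruence|simpl; lia]).
  set (Dr := INR d + 1).
  assert (HdR : 1 <= INR d) by (apply le_INR in Hd; simpl in Hd; lra).
  set (Hs := Hsum Q).
  assert (HHs : 0 <= Hs).
  { apply Ssum_nonneg. intros q Hq. pose proof (Hqpos q Hq). unfold Rdiv. rewrite Rmult_1_l. left; apply Rinv_0_lt_compat, IZR_lt; lia. }
  set (A := INR d * Hs).
  set (K := Dr * A).
  set (beta := Dr + 3).
  set (y := beta * A + 2).
  assert (HA : 0 <= A) by (unfold A; apply Rmult_le_pos; lra).
  assert (Hbeta : 5 <= beta) by (unfold beta, Dr; lra).
  assert (Hy0 : 0 <= y) by (unfold y; assert (0 <= beta * A) by (apply Rmult_le_pos; lra); lra).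
  set (m := Z.to_nat (up (y / 2))).
  pose proof (archimed (y / 2)) as [Hup1 Hup2].
  assert (Hupp : (0 <= up (y / 2))%Z) by (apply le_IZR; lra).
  set (L := (2 * m)%nat).
  assert (HLlo : y <= INR L).
  { unfold L, m. rewrite mult_INR, (INR_IZR_INZ (Z.to_nat _)), Z2Nat.id by auto. simpl (INR 2). lra. }
  assert (HLhi : INR L <= y + 2).
  { unfold L, m. rewrite mult_INR, (INR_IZR_INZ (Z.to_nat _)), Z2Nat.id by auto. simpl (INR 2). lra. }
  assert (HLeven : Nat.even L = true) by (unfold L; apply Nat.even_mul; auto).
  set (Lam := ln (Dr * INR n)).
  assert (HDn : 2 <= Dr * INR n) by (apply le_INR in Hn1; simpl in Hn1; unfold Dr; nra).
  set (W := 2 * exp K * (Dr * INR n) ^ L).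
  assert (HW : 0 < W) by (unfold W; apply Rmult_lt_0_compat; [apply Rmult_lt_0_compat; [lra|apply exp_pos]|apply pow_lt; lra]).
  set (N := Z.to_nat (up W)).
  pose proof (archimed W) as [HW1 HW2].
  assert (HN : W < INR N <= W + 1).
  { unfold N. rewrite INR_IZR_INZ, Z2Nat.id. lra. apply le_IZR. lra. }
  assert (Hhyp : forall q, In q Q -> (0 < q)%Z /\ periodic (fun t => ind (bad q t)) q) by (intros; split; auto).
  assert (Hper1 : periodic (fun _ : Z => 1) (Z.of_nat 1)) by (intros t; reflexivity).
  assert (Hnn1 : forall t : Z, 0 <= (fun _ : Z => 1) t) by (intros; simpl; lra).
  assert (Hg1 : forall q, In q Q -> Z.gcd (Z.of_nat 1) q = 1%Z) by (intros; apply Z.gcd_1_l).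
  pose proof (sieve_main bad Q Hhyp Hpc L (fun _ => 1) 1%nat ltac:(lia) Hper1 Hnn1 Hg1 0%Z N) as HS.
  assert (Hs1 : sumZ (fun _ : Z => 1) 0 1 = 1) by (unfold sumZ; simpl; lra).
  rewrite Hs1 in HS. change (INR 1) with 1 in HS.
  set (good := fun t => forallb (fun q => negb (bad q t)) Q).
  set (count := sumZ (fun t => ind (good t)) 0 N).
  assert (Hc1 : sumZ (fun t => 1 * Tfun Q (at_ bad t) L) 0 N <= count).
  { unfold count, sumZ. apply sumN_le. intros i _.
    pose proof (bonf Q (at_ bad (0 + Z.of_nat i)%Z) ltac:(intros; unfold at_; apply ind_01) L) as Hb.
    rewrite HLeven in Hb. rewrite Pr_ind in Hb. unfold good. lra. }
  assert (Hgq : forall q, In q Q -> 0 <= gq bad q <= INR d * (1 / IZR q) /\ gq bad q <= 1 /\ INR d + 1 <= IZR q).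
  { intros q Hq. pose proof (Hrho q Hq). pose proof (HQd q Hq) as Hqd.
    assert (Hqd' : INR d + 1 <= IZR q) by (rewrite INR_IZR_INZ, <- plus_IZR; apply IZR_le; lia).
    unfold gq. assert (0 < IZR q) by lra. repeat split; auto.
    - unfold Rdiv. apply Rmult_le_pos; [lra|left; apply Rinv_0_lt_compat; lra].
    - unfold Rdiv. rewrite Rmult_1_l. apply Rmult_le_compat_r; [left; apply Rinv_0_lt_compat; lra|lra].
    - apply Rmult_le_reg_r with (IZR q). lra. unfold Rdiv. rewrite Rmult_assoc, Rinv_l by lra. lra. }
  assert (HPr : exp (- K) <= Pr Q (gq bad)).
  { replace K with (Ssum Q (fun q => INR d * (INR d + 1) / IZR q)).
    apply Pr_lower. intros q Hq. destruct (Hgq q Hq) as [[H1 H2] [H3 H4]]. split; auto.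
    apply one_minus_exp; auto. lra. split; auto. unfold Rdiv in *. lra.
    unfold K, A, Hs, Hsum, Dr. rewrite <- Ssum_scal. rewrite <- Ssum_scal. apply Ssum_ext_in. intros. unfold Rdiv. ring. }
  assert (HSg : Ssum Q (gq bad) <= A).
  { unfold A, Hs, Hsum. rewrite <- Ssum_scal. apply Ssum_le. intros q Hq. apply (Hgq q Hq). }
  assert (HSg0 : 0 <= Ssum Q (gq bad)) by (apply Ssum_nonneg; intros q Hq; apply (Hgq q Hq)).
  assert (HEf : Efun Q (gq bad) L <= exp (- K) / 2).
  { eapply Rle_trans. apply Efun_bound. intros q Hq; apply (Hgq q Hq).
    apply Rle_trans with (A ^ L / INR (fact L)).
    { unfold Rdiv. apply Rmult_le_compat_r. left; apply Rinv_0_lt_compat, lt_0_INR, lt_O_fact.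
      apply pow_incr; auto. }
    apply tail_small with beta; auto. unfold Dr; lra.
    pose proof (beta_ln (S d) ltac:(lia)) as Hbl. rewrite S_INR in Hbl. unfold beta, Dr. exact Hbl. }
  assert (HTg : exp (- K) / 2 <= Tfun Q (gq bad) L).
  { pose proof (bonf Q (gq bad) ltac:(intros q Hq; destruct (Hgq q Hq) as [[? ?] [? ?]]; split; auto) L) as Hb.
    rewrite HLeven in Hb. lra. }
  assert (HU : Ufun Q (rho bad) L <= (Dr * INR n) ^ L).
  { eapply Rle_trans. apply Ufun_bound. intros q Hq; apply (Hrho q Hq).
    apply pow_incr. split. pose proof (Ssum_nonneg Q (rho bad) ltac:(intros q Hq; apply (Hrho q Hq))). lra.
    pose proof (Ssum_le_len Q (rho bad) (INR d) ltac:(intros q Hq; apply (Hrho q Hq))). fold n in H.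
    assert (1 <= INR n) by (apply le_INR in Hn1; simpl in Hn1; lra). unfold Dr. nra. }
  assert (Hcount : 0 < count).
  { assert (HeK : exp (- K) * exp K = 1) by (rewrite <- exp_plus; replace (- K + K) with 0 by ring; apply exp_0).
    assert (0 < exp (- K)) by apply exp_pos.
    assert (INR N * (exp (- K) / 2) > (Dr * INR n) ^ L).
    { apply Rlt_gt. apply Rle_lt_trans with (W * (exp (- K) / 2)).
      right. unfold W. replace (2 * exp K * (Dr * INR n) ^ L * (exp (- K) / 2)) with ((exp (- K) * exp K) * (Dr * INR n) ^ L) by (field; lra).
      rewrite HeK. ring.
      apply Rmult_lt_compat_r. lra. lra. }
    assert (INR N * (exp (- K) / 2) <= INR N * Tfun Q (gq bad) L) by (apply Rmult_le_compat_l; [apply pos_INR|auto]).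
    assert (HS' := Rle_trans _ _ _ (Rle_abs (- (sumZ (fun t => 1 * Tfun Q (at_ bad t) L) 0 N - INR N * (1 / 1) * Tfun Q (gq bad) L))) (Rle_trans _ _ _ (Req_le _ _ (Rabs_Ropp _)) HS)).
    replace (INR N * (1 / 1)) with (INR N) in HS' by (field).
    lra. }
  destruct (sumZ_pos_exists good 0%Z N Hcount) as [j [Hj Hgood]].
  exists (x1 + P * Z.of_nat j)%Z.
  split; [|split; [|split]].
  - pose proof (Zle_0_nat j). nia.
  - assert (Hxz : (x1 + P * Z.of_nat j <= k + P * Z.of_nat N)%Z) by nia.
    assert (Hxz' : IZR (x1 + P * Z.of_nat j) <= IZR k + IZR P * INR N) by (rewrite INR_IZR_INZ, <- mult_IZR, <- plus_IZR; apply IZR_le; exact Hxz).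
    assert (HPr0 : 0 < IZR P) by (apply IZR_lt; lia).
    eapply Rle_trans; [exact Hxz'|]. apply Rplus_le_compat_l. apply Rmult_le_compat_l; [lra|].
    set (X := 3 + ln (ln (INR n + 1))).
    assert (HE : E_bound n d = exp (4 * Dr ^ 2 * X * Lam)).
    { unfold E_bound, Rpower. rewrite mult_INR, plus_INR. simpl (INR 1). fold Dr. reflexivity. }
    rewrite HE.
    assert (HK0 : 0 <= K) by (unfold K; apply Rmult_le_pos; unfold Dr; lra).
    assert (HeK1 : 1 <= exp K) by (rewrite <- exp_0; apply exp_le; auto).
    assert (HDL1 : 1 <= (Dr * INR n) ^ L) by (apply pow_R1_Rle; lra).
    assert (H3 : W + 1 <= exp (ln 3 + K + INR L * Lam)).
    { rewrite !exp_plus, exp_ln by lra.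
      replace (exp (INR L * Lam)) with ((Dr * INR n) ^ L).
      2:{ rewrite <- Rpower_pow by lra. reflexivity. }
      unfold W. assert (1 <= exp K * (Dr * INR n) ^ L) by nra. nra. }
    apply Rle_trans with (W + 1). lra.
    eapply Rle_trans; [exact H3|]. apply exp_le.
    replace K with ((Dr - 1) * Dr * Hs) by (unfold K, A, Dr; ring).
    apply numeric_core.
    + destruct d as [|[|d']]. lia. left; unfold Dr; simpl; lra.
      right. unfold Dr. rewrite !S_INR. pose proof (pos_INR d'). lra.
    + auto.
    + split. pose proof ln3_ge1'; lra. pose proof (ln_le_sub1 3); lra.
    + split. apply pos_INR. replace (Dr - 1) with (INR d) by (unfold Dr; ring).
      unfold y, A, beta in HLhi. lra.
    + destruct (Nat.eq_dec n 1) as [En|En].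
      * left. split; [|split].
        -- unfold Hs, Hsum. unfold n in En. destruct Q as [|q [|q' Q']]; simpl in En; try lia.
           simpl. destruct (Hgq q (or_introl eq_refl)) as [_ [_ Hq]].
           rewrite Rplus_0_r. unfold Rdiv. rewrite !Rmult_1_l. apply Rinv_le_contravar; unfold Dr in *; lra.
        -- unfold Lam. rewrite En. simpl (INR 1). rewrite Rmult_1_r. pose proof ln_ge_half2.
           assert (ln 2 <= ln Dr) by (apply ln_le'; unfold Dr; lra). lra.
        -- unfold X. rewrite En. simpl (INR 1).
           assert (ln (/ 2) <= ln (ln (1 + 1))) by (apply ln_le'; [lra|]; replace (1 + 1) with 2 by ring; pose proof ln_ge_half2; lra).
           rewrite ln_Rinv in H by lra. pose proof ln2_le. lra.
      * right. assert (Hn2 : (2 <= n)%nat) by lia.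
        assert (Hn2R : 2 <= INR n) by (apply le_INR in Hn2; simpl in Hn2; lra).
        assert (HX : 3 <= X).
        { unfold X. assert (1 <= ln (INR n + 1)) by (eapply Rle_trans; [apply ln3_ge1'|]; apply ln_le'; lra).
          assert (0 <= ln (ln (INR n + 1))) by (rewrite <- ln_1; apply ln_le'; lra). lra. }
        split; [|split; [auto|split]].
        -- unfold Hs. eapply Rle_trans. apply H_bound. split; auto. fold n; auto. fold n. unfold X. lra.
        -- unfold Lam. eapply Rle_trans; [apply ln3_ge1'|]. apply ln_le'. lra. unfold Dr in *. nra.
        -- intros HD3. unfold Lam. eapply Rle_trans; [apply ln6_ge|]. apply ln_le'. lra. nra.
  - intros m0 Hm0. replace (x1 + P * Z.of_nat j - b m0)%Z with ((x1 - x0) + (x0 - b m0) + P * Z.of_nat j)%Z by ring.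
    apply Z.divide_add_r. apply Z.divide_add_r. apply Z.divide_trans with P; auto. apply Hx0; auto.
    apply Z.divide_mul_l. auto.
  - intros q i Hq Hi Hdiv. unfold good in Hgood. rewrite forallb_forall in Hgood.
    specialize (Hgood q Hq). apply negb_true_iff in Hgood. unfold bad in Hgood.
    assert (Hex : existsb (fun i0 : nat => ((x1 + P * (0 + Z.of_nat j) - c q i0) mod q =? 0)%Z) (seq 1 d) = true).
    { apply existsb_exists. exists i. split. apply in_seq. lia. apply Z.eqb_eq. rewrite Z.add_0_l. apply Zdivide_mod. auto. }
    congruence.
Qed.
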